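(* Let $q$ be a prime power, let $\alpha$ be a primitive element of $\mathbb{F}_{q^n}$, and let $\mathcal{F}$ be a flag on $\mathbb{F}_{q^n}$ whose best friend is the subfield $\mathbb{F}_{q^m}$. Let $\beta\in\mathbb{F}_{q^n}^*$ and write $\langle\beta\rangle=\langle\alpha^l\rangle$ with $l$ a divisor of $q^n-1$. If $\mathrm{Orb}_\beta(\mathcal{F})$ is an optimum distance flag code and $t$ is a dimension in the type vector of $\mathcal{F}$, then $m$ divides $t$ and $$\frac{\mathrm{lcm}\left(l,\frac{q^n-1}{q^m-1}\right)}{l}\le\begin{cases}\left\lfloor\frac{q^n-1}{q^t-1}\right\rfloor & \text{if } 2t\le n,\\[4pt] \left\lfloor\frac{q^n-1}{q^{n-t}-1}\right\rfloor & \text{if } 2t>n.\end{cases}$$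
   Context: A flag of type $(t_1,\ldots,t_r)$ on $\mathbb{F}_{q^n}$ is a sequence $(\mathcal{F}_1,\ldots,\mathcal{F}_r)$ of $\mathbb{F}_q$-subspaces with $\{0\}\subsetneq\mathcal{F}_1\subsetneq\cdots\subsetneq\mathcal{F}_r\subsetneq\mathbb{F}_{q^n}$ and $\dim_{\mathbb{F}_q}\mathcal{F}_i=t_i$. For $\beta\in\mathbb{F}_{q^n}^*$ of multiplicative order $|\beta|$, $\mathcal{U}\beta=\{u\beta:u\in\mathcal{U}\}$, $\mathcal{F}\beta=(\mathcal{F}_1\beta,\ldots,\mathcal{F}_r\beta)$ and $\mathrm{Orb}_\beta(\mathcal{F})=\{\mathcal{F}\beta^j:0\le j\le|\beta|-1\}$. A subfield $\mathbb{F}_{q^m}$ is a friend of $\mathcal{F}$ if every $\mathcal{F}_i$ is an $\mathbb{F}_{q^m}$-vector space; the best friend is the largest friend. Subspace distance $d_S(\mathcal{U},\mathcal{V})=\dim(\mathcal{U}+\mathcal{V})-\dim(\mathcal{U}\cap\mathcal{V})$; flag distance $d_f(\mathcal{F},\mathcal{F}')=\sum_i d_S(\mathcal{F}_i,\mathcal{F}'_i)$; the minimum distance of a set of flags is the minimum over distinct pairs ($0$ for a single flag). A set of flags of type $(t_1,\ldots,t_r)$ on $\mathbb{F}_{q^n}$ is an optimum distance flag code if its minimum distance equals $2\left(\sum_{t_i\le\lfloor n/2\rfloor}t_i+\sum_{t_i>\lfloor n/2\rfloor}(n-t_i)\right)$. *)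

(* Defs.v *)
From HB Require Import structures.
From mathcomp Require Import all_boot all_order all_algebra all_field.
Set Implicit Arguments. Unset Strict Implicit. Unset Printing Implicit Defensive.
Import GRing.Theory.
Local Open Scope ring_scope.

(* Setting: F = F_q (a finite field, q = #|F|), L = F_{q^n} realised as a
   field extension of F of dimension n = \dim {:L}. *)

Section FlagDefs.
Variables (F : finFieldType) (L : fieldExtType F).

Definition flag := seq {vspace L}.

Definition is_flag (Fl : flag) : Prop :=
  [/\ (0 < size Fl)%N,
      all (fun U => (0 < \dim U)%N && (\dim U < \dim {:L})%N) Fl &
      sorted (fun U V => (U <= V)%VS && (\dim U < \dim V)%N) Fl].

Definition flag_type (Fl : flag) : seq nat := [seq \dim U | U <- Fl].

Definition vs_mul (U : {vspace L}) (beta : L) : {vspace L} := (U * <[beta]>)%VS.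
Definition flag_mul (Fl : flag) (beta : L) : flag := [seq vs_mul U beta | U <- Fl].

(* multiplicative order of beta <> 0 (the least k >= 1 with beta^k = 1);
   any nonzero element of L satisfies beta^(q^n - 1) = 1. *)
Definition mult_order (beta : L) : nat :=
  head 0%N [seq k <- iota 1 (#|F| ^ \dim {:L}) | beta ^+ k == 1].

Definition flag_orbit (beta : L) (Fl : flag) : seq flag :=
  [seq flag_mul Fl (beta ^+ j) | j <- iota 0 (mult_order beta)].

Definition subspace_dist (U V : {vspace L}) : nat :=
  (\dim (U + V) - \dim (U :&: V))%N.

Definition flag_dist (Fl Fl' : flag) : nat :=
  \sum_(i < size Fl) subspace_dist (nth 0%VS Fl i) (nth 0%VS Fl' i).

(* minimum distance over distinct pairs; 0 if there is no such pair *)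
Definition min_dist (C : seq flag) : nat :=
  let ds := [seq flag_dist p.1 p.2 | p <- [seq (a, b) | a <- C, b <- C] & p.1 != p.2] in
  if ds is d :: ds' then foldr minn d ds' else 0%N.

Definition optimum_distance_code (C : seq flag) (ty : seq nat) : Prop :=
  min_dist C = (2 * \sum_(t <- ty)
                   (if (t <= (\dim {:L})./2)%N then t else \dim {:L} - t))%N.

(* K is a friend: every F_i is a K-vector space *)
Definition friend (K : {subfield L}) (Fl : flag) : Prop :=
  all (fun U => (K * U <= U)%VS) Fl.

Definition best_friend (K : {subfield L}) (Fl : flag) : Prop :=
  friend K Fl /\ forall K' : {subfield L}, friend K' Fl -> (K' <= K)%VS.

End FlagDefs.

Arguments is_flag {F L}.
Arguments flag_type {F L}.
Arguments vs_mul {F L}.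
Arguments flag_mul {F L}.
Arguments mult_order {F L}.
Arguments flag_orbit {F L}.
Arguments subspace_dist {F L}.
Arguments flag_dist {F L}.
Arguments min_dist {F L}.
Arguments optimum_distance_code {F L}.
Arguments friend {F L}.
Arguments best_friend {F L}.

(* Main.v *)
Require Import Defs.
From HB Require Import structures.
From mathcomp Require Import all_boot all_order all_algebra all_field.
From mathcomp Require Import zify.
Import GRing.Theory.
Local Open Scope ring_scope.
Import VectorInternalTheory.
Set Implicit Arguments. Unset Strict Implicit.

Section Count.
Variable F : finFieldType.

Lemma card_rowspace n k (A : 'M[F]_(k, n)) :
  #|[set v : 'rV[F]_n | (v <= A)%MS]| = (#|F| ^ \rank A)%N.
Proof.
have -> : [set v : 'rV[F]_n | (v <= A)%MS] =
          [set u *m row_base A | u in [set: 'rV[F]_(\rank A)]].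
  apply/setP => v; rewrite inE; apply/idP/imsetP.
    rewrite -(eq_row_base A) => /submxP [u ->]; by exists u; rewrite ?inE.
  by move=> [u _ ->]; rewrite -(eq_row_base A) submxMl.
rewrite card_imset; last exact: row_free_inj (row_base_free A).
by rewrite cardsT card_mx mul1n.
Qed.

Lemma card_rowspace0 n k (A : 'M[F]_(k, n)) :
  #|[set v : 'rV[F]_n | (v <= A)%MS & v != 0]| = (#|F| ^ \rank A - 1)%N.
Proof.
rewrite -card_rowspace.
have -> : [set v : 'rV[F]_n | (v <= A)%MS & v != 0] =
          [set v : 'rV[F]_n | (v <= A)%MS] :\ 0.
  by apply/setP => v; rewrite !inE andbC.
by rewrite [in RHS](cardsD1 0) inE sub0mx /= addnC addnK.
Qed.

Lemma count_rows n r e (B : nat -> 'M[F]_n) :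
  (forall j, (j < e)%N -> \rank (B j) = r) ->
  (forall j k (v : 'rV[F]_n), (j < k)%N -> (k < e)%N ->
      (v <= B j)%MS -> (v <= B k)%MS -> v = 0) ->
  (e * (#|F| ^ r - 1) <= #|F| ^ n - 1)%N.
Proof.
move=> Hr Hd.
pose S j := [set v : 'rV[F]_n | (v <= B j)%MS & v != 0].
have HS : forall e', (e' <= e)%N -> #|\bigcup_(j < e') S j| = (e' * (#|F| ^ r - 1))%N.
  elim=> [|e' IH] he; first by rewrite big_ord0 cards0.
  rewrite big_ord_recr /= cardsU IH ?(ltnW he) // card_rowspace0 Hr //.
  have -> : (\bigcup_(i < e') S i) :&: S e' = set0.
    apply/setP => v; rewrite !inE; apply/negP => /andP [/bigcupP [j _]].
    rewrite inE => /andP [hj nz] /andP [he' _].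
    by move: nz; rewrite (Hd j e' v) ?eqxx.
  by rewrite cards0 subn0 mulSn addnC.
have := HS e (leqnn e) => <-.
have -> : (#|F| ^ n - 1)%N = #|[set~ (0 : 'rV[F]_n)]|.
  by rewrite cardsC1 card_mx mul1n subn1.
apply: subset_leq_card; apply/subsetP => v /bigcupP [j _].
by rewrite !inE => /andP [_ ->].
Qed.
End Count.

Section Vs.
Variables (F : finFieldType) (L : fieldExtType F).
Implicit Types (U V W : {vspace L}) (x y z : L) (Fl : flag L).

Lemma vs_mulM U x y : vs_mul (vs_mul U x) y = vs_mul U (x * y).
Proof. by rewrite /vs_mul -prodvA prodv_line. Qed.

Lemma vs_mul1 U : vs_mul U 1 = U.
Proof. by rewrite /vs_mul prodv1. Qed.

Lemma dim_vs_mul U x : x != 0 -> \dim (vs_mul U x) = \dim U.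
Proof.
move=> x0; apply/eqP; rewrite eqn_leq; apply/andP; split.
  by have := dim_prodv U <[x]>; rewrite dim_vline x0 muln1.
have := dim_prodv (vs_mul U x) <[x^-1]>.
by rewrite dim_vline invr_eq0 x0 muln1 -/(vs_mul _ _) vs_mulM mulfV // vs_mul1.
Qed.

Lemma stab_in_K K Fl z : best_friend K Fl ->
  (forall U, U \in Fl -> vs_mul U z = U) -> z \in K.
Proof.
case=> _ bf hz; rewrite -sub_adjoin1v; apply: bf; apply/allP => U hU /=.
apply: agenv_modl; rewrite prodvDl prod1v subv_add subvv /= prodvC.
by have := hz U hU; rewrite /vs_mul => ->.
Qed.

Lemma flag_eq_stab Fl x y : y != 0 -> flag_mul Fl x = flag_mul Fl y ->
  forall U, U \in Fl -> vs_mul U (x / y) = U.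
Proof.
move=> y0 /eq_in_map h U hU.
by rewrite -vs_mulM h // vs_mulM mulfV // vs_mul1.
Qed.

Lemma fermat_unit (K : {subfield L}) z : z \in K -> z != 0 ->
  z ^+ (#|F| ^ \dim K - 1) = 1.
Proof.
rewrite Fermat's_little_theorem => /eqP h z0.
have hq : (0 < #|F| ^ \dim K)%N by rewrite expn_gt0 (ltn_trans _ (finNzRing_gt1 F)).
apply: (mulfI z0); rewrite mulr1 -exprS subn1 prednK //.
Qed.

Lemma flag_dist_mul Fl x y : flag_dist (flag_mul Fl x) (flag_mul Fl y) =
  (\sum_(i < size Fl) subspace_dist (vs_mul (nth 0%VS Fl i) x) (vs_mul (nth 0%VS Fl i) y))%N.
Proof.
rewrite /flag_dist /flag_mul size_map; apply: eq_bigr => i _.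
by rewrite !(nth_map 0%VS) ?ltn_ord.
Qed.

Definition Mx (n t : nat) := if (t <= n./2)%N then t else (n - t)%N.

Lemma sd_le V W : \dim V = \dim W ->
  (subspace_dist V W <= 2 * Mx (\dim {:L}) (\dim V))%N.
Proof.
move=> hVW; have h1 := dimv_sum_cap V W.
have h2 : (\dim (V + W) <= \dim {:L})%N by apply: dimvS; apply: subvf.
have h3 : (\dim (V :&: W) <= \dim V)%N by apply: dimvS; apply: capvSl.
rewrite /subspace_dist /Mx; case: ifP => _; lia.
Qed.

Lemma min_dist_le (C : seq (flag L)) a b : a \in C -> b \in C -> a != b ->
  (min_dist C <= flag_dist a b)%N.
Proof.
move=> ha hb ab; rewrite /min_dist.
set ds := [seq _ | _ <- _ & _].
have : flag_dist a b \in ds.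
  apply/mapP; exists (a, b) => //; rewrite mem_filter /= ab /=.
  exact: (allpairs_f pair ha hb).
case: ds => [//|d ds'].
elim: ds' (flag_dist a b) => [|y ys IH] w; rewrite !inE.
  by move/eqP ->.
case/or3P => [/eqP -> | /eqP -> | hw] /=.
- have := IH d; rewrite inE eqxx => /(_ isT); lia.
- lia.
- have := IH w; rewrite inE hw orbT => /(_ isT); lia.
Qed.

Lemma sum_eq_pt k (D M : 'I_k -> nat) i0 : (forall i, D i <= M i)%N ->
  (\sum_i M i <= \sum_i D i)%N -> D i0 = M i0.
Proof.
move=> h hs; apply/eqP; rewrite eqn_leq h /=.
move: hs; rewrite (bigD1 i0) // [X in (_ <= X)%N](bigD1 i0) //=.
move=> hs; have hh : (\sum_(i < k | i != i0) D i <= \sum_(i < k | i != i0) M i)%N.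
  by apply: leq_sum => i _; exact: h i.
by have := leq_trans hs (leq_add (leqnn (D i0)) hh); rewrite leq_add2r.
Qed.

Lemma mult_order_spec x k : (0 < k <= #|F| ^ \dim {:L})%N -> x ^+ k = 1 ->
  (0 < mult_order x)%N /\ x ^+ mult_order x = 1.
Proof.
move=> hk xk; rewrite /mult_order.
have : k \in [seq k <- iota 1 (#|F| ^ \dim {:L}) | x ^+ k == 1].
  by rewrite mem_filter xk eqxx mem_iota /= add1n ltnS.
case E : [seq _ <- _ | _] => [//|h tl] _ /=.
have : h \in [seq k <- iota 1 (#|F| ^ \dim {:L}) | x ^+ k == 1].
  by rewrite E mem_head.
by rewrite mem_filter mem_iota => /andP [/eqP -> /andP [h1 _]].
Qed.

End Vs.

Lemma pow_pred_gt0 q k : (1 < q)%N -> (0 < k)%N -> (0 < q ^ k - 1)%N.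
Proof. by move=> q1 k0; rewrite subn_gt0 -{1}(expn0 q) ltn_exp2l. Qed.

Lemma dvdn_pred_exp a c : (0 < a)%N -> (a - 1 %| a ^ c - 1)%N.
Proof. move=> a0; elim: c => [|c IH]; first by rewrite expn0 subnn dvdn0.
have h : (a <= a * a ^ c)%N by rewrite leq_pmulr // expn_gt0 a0.
have -> : (a ^ c.+1 - 1 = a * (a ^ c - 1) + (a - 1))%N by rewrite expnS mulnBr muln1; lia.
by rewrite dvdn_add // dvdn_mull.
Qed.

Unset Implicit Arguments. Set Strict Implicit.

Theorem theorem4p21 (F : finFieldType) (L : fieldExtType F)
  (alpha beta : L) (l : nat) (K : {subfield L}) (Fl : flag L) (t : nat) :
  let q := #|F| in
  let n := \dim {:L} in
  let m := \dim K in
  (* alpha is a primitive element of F_{q^n} *)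
  (q ^ n - 1)%N.-primitive_root alpha ->
  is_flag Fl ->
  best_friend K Fl ->
  beta != 0 ->
  (l %| q ^ n - 1)%N ->
  (* <beta> = <alpha^l> *)
  (forall x : L, (exists i : nat, x = beta ^+ i) <->
                 (exists i : nat, x = (alpha ^+ l) ^+ i)) ->
  optimum_distance_code (flag_orbit beta Fl) (flag_type Fl) ->
  t \in flag_type Fl ->
  (m %| t)%N /\
  (lcmn l ((q ^ n - 1) %/ (q ^ m - 1)) %/ l <=
     (if (2 * t <= n)%N then (q ^ n - 1) %/ (q ^ t - 1)
      else (q ^ n - 1) %/ (q ^ (n - t) - 1)))%N.
Proof.
cbv zeta => Hprim Hflag Hbf Hb0 Hl Hgen Hopt Ht.
case/mapP: Ht => U0 hU0 ht.
split.
  by rewrite ht; apply: field_module_dimS; exact: (allP Hbf.1 U0 hU0).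
have q1 : (1 < #|F|)%N := finNzRing_gt1 F.
have n0 : (0 < \dim {:L})%N := adim_gt0 {:L}%AS.
have m0 : (0 < \dim K)%N := adim_gt0 K.
have mn : (\dim K %| \dim {:L})%N := field_dimS (subvf K).
have N0 : (0 < #|F| ^ \dim {:L} - 1)%N by apply: pow_pred_gt0.
have qm0 : (0 < #|F| ^ \dim K - 1)%N by apply: pow_pred_gt0.
have hqm : (#|F| ^ \dim K - 1 %| #|F| ^ \dim {:L} - 1)%N.
  case/dvdnP: mn => c ->; rewrite mulnC expnM; apply: dvdn_pred_exp.
  by rewrite expn_gt0 ltnW.
set N := (#|F| ^ \dim {:L} - 1)%N in N0 hqm Hprim Hl *.
set d := (N %/ (#|F| ^ \dim K - 1))%N.
have hN : N = (d * (#|F| ^ \dim K - 1))%N by rewrite divnK.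
have l0 : (0 < l)%N by case: l Hl {Hgen} => // ; rewrite dvd0n; lia.
set e := (lcmn l d %/ l)%N.
have he : lcmn l d = (e * l)%N by rewrite divnK // dvdn_lcml.
set a := alpha ^+ l.
have hA : alpha ^+ N = 1 := prim_expr_order Hprim.
have alpha0 : alpha != 0.
  apply/eqP => h0; move: hA; rewrite h0 expr0n.
  have -> : (N == 0%N) = false by apply/negbTE; rewrite -lt0n.
  by move/eqP; rewrite eq_sym oner_eq0.
have a0 : a != 0 by rewrite expf_neq0.
have [i0 Hbeta] : exists i0, beta = a ^+ i0 by apply/(Hgen beta); exists 1%N; rewrite expr1.
have bN : beta ^+ N = 1.
  by rewrite Hbeta /a -!exprM mulnA mulnC exprM hA expr1n.
have [o0 bo] := @mult_order_spec F L beta N (ltac:(rewrite N0 /N leq_subr //)) bN.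
have Horb : forall j, flag_mul Fl (a ^+ j) \in flag_orbit beta Fl.
  move=> j; have [i hi] := (Hgen (a ^+ j)).2 (ex_intro _ j erefl).
  rewrite hi -(expr_mod i bo); apply: (map_f (fun j => flag_mul Fl (beta ^+ j))).
  by rewrite mem_iota add0n ltn_pmod.
have Hdist : forall j k, (j < k)%N -> (k < e)%N ->
    flag_mul Fl (a ^+ j) != flag_mul Fl (a ^+ k).
  move=> j k jk ke; apply/negP => /eqP heq.
  have aj0 : a ^+ j != 0 by rewrite expf_neq0.
  have hz := flag_eq_stab aj0 (esym heq).
  rewrite -expfB // in hz.
  have zK := stab_in_K Hbf hz.
  have z0 : a ^+ (k - j) != 0 by rewrite expf_neq0.
  have := fermat_unit zK z0; rewrite /a -!exprM => /eqP.
  rewrite -(prim_order_dvd Hprim) mulnA {1}hN dvdn_pmul2r // => hd.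
  have : (lcmn l d %| l * (k - j))%N by rewrite dvdn_lcm hd dvdn_mulr.
  rewrite he [(l * (k - j))%N]mulnC dvdn_pmul2r // => /dvdn_leq.
  rewrite subn_gt0 jk => /(_ isT); lia.
set i1 := index U0 Fl.
have hi1 : (i1 < size Fl)%N by rewrite index_mem.
have hnth : nth 0%VS Fl i1 = U0 by rewrite nth_index.
have HD : forall j k, (j < k)%N -> (k < e)%N ->
    subspace_dist (vs_mul U0 (a ^+ j)) (vs_mul U0 (a ^+ k)) = (2 * Mx (\dim {:L}) t)%N.
  move=> j k jk ke.
  have := min_dist_le (Horb j) (Horb k) (Hdist j k jk ke).
  rewrite Hopt flag_dist_mul.
  have -> : (2 * \sum_(t <- flag_type Fl)
      (if (t <= (\dim {:L})./2)%N then t else \dim {:L} - t))%N =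
      (\sum_(i < size Fl) 2 * Mx (\dim {:L}) (\dim (nth 0%VS Fl i)))%N.
    by rewrite big_distrr /= /flag_type big_map (big_nth 0%VS) big_mkord.
  move=> hs.
  have := sum_eq_pt (Ordinal hi1) _ hs.
  rewrite /= hnth -ht => -> //.
  move=> i; have := sd_le (V := vs_mul (nth 0%VS Fl i) (a ^+ j))
                          (W := vs_mul (nth 0%VS Fl i) (a ^+ k)).
  by rewrite !dim_vs_mul ?expf_neq0 // => /(_ erefl).
have dimV : forall j, \dim (vs_mul U0 (a ^+ j)) = t.
  by move=> j; rewrite dim_vs_mul ?expf_neq0 // ht.
have t0 : (0 < t)%N.
  by case: Hflag => _ /allP /(_ U0 hU0) /andP [h1 h2]; rewrite ht.
have tn : (t < \dim {:L})%N.
  by case: Hflag => _ /allP /(_ U0 hU0) /andP [h1 h2]; rewrite ht.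
case: ifP => h2t.
- have Mt : Mx (\dim {:L}) t = t by rewrite /Mx; case: ifP => //; lia.
  rewrite leq_divRL; last by apply: pow_pred_gt0.
  rewrite /N dimvf.
  apply: (count_rows (B := fun j => vs2mx (vs_mul U0 (a ^+ j)))).
    by move=> j _; exact: dimV.
  move=> j k v jk ke hvj hvk.
  have hc := dimv_sum_cap (vs_mul U0 (a ^+ j)) (vs_mul U0 (a ^+ k)).
  have := HD j k jk ke; rewrite Mt /subspace_dist => hsd.
  have hcap0 : \dim (vs_mul U0 (a ^+ j) :&: vs_mul U0 (a ^+ k)) = 0%N.
    by rewrite !dimV in hc; lia.
  have hv : (v <= vs2mx (vs_mul U0 (a ^+ j) :&: vs_mul U0 (a ^+ k))%VS)%MS.
    by rewrite /capv (mx2vsK (vs2mx _ :&: vs2mx _)%MS) sub_capmx hvj hvk.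
  move: hcap0; rewrite /dimv => /eqP; rewrite mxrank_eq0 => /eqP h0.
  by move: hv; rewrite h0 submx0 => /eqP.
- have Mt : Mx (\dim {:L}) t = (\dim {:L} - t)%N by rewrite /Mx; case: ifP => //; lia.
  rewrite leq_divRL; last by apply: pow_pred_gt0; rewrite // subn_gt0.
  rewrite /N dimvf.
  apply: (count_rows (B := fun j => kermx (vs2mx (vs_mul U0 (a ^+ j)))^T)).
    by move=> j _; rewrite mxrank_ker mxrank_tr; have := dimV j; rewrite /dimv => ->.
  move=> j k v jk ke hvj hvk.
  have hc := dimv_sum_cap (vs_mul U0 (a ^+ j)) (vs_mul U0 (a ^+ k)).
  have := HD j k jk ke; rewrite Mt /subspace_dist => hsd.
  have hsum : \dim (vs_mul U0 (a ^+ j) + vs_mul U0 (a ^+ k)) = \dim {:L}.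
    by rewrite !dimV in hc; lia.
  have hk : forall A : 'M[F]_(dim L), (v <= kermx A^T)%MS -> (A <= kermx v^T)%MS.
    move=> A /sub_kermxP h; apply/sub_kermxP.
    by have := congr1 trmx h; rewrite trmx_mul trmxK trmx0.
  have hs : (vs2mx (vs_mul U0 (a ^+ j)) + vs2mx (vs_mul U0 (a ^+ k)) <= kermx v^T)%MS.
    by rewrite addsmx_sub !hk.
  have hfull : (1%:M <= vs2mx (vs_mul U0 (a ^+ j)) + vs2mx (vs_mul U0 (a ^+ k)))%MS.
    rewrite sub1mx /row_full.
    move: hsum; rewrite dimvf /dimv /addv (mx2vsK (vs2mx _ + vs2mx _)%MS) => ->.
    by [].
  have := submx_trans hfull hs => /sub_kermxP; rewrite mul1mx => h.
  by rewrite -[v]trmxK h trmx0.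
Qed.
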